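(* For every nonnegative integer $n$, $$\sum_{k=0}^{\infty}(-1)^k(4k+1)\,\frac{(-n)_k\,(-3n-1)_k\,(\tfrac12)_k}{k!\,(n+\tfrac32)_k\,(3n+\tfrac52)_k}=\left(\frac{3^3}{2^8}\right)^n\frac{(\tfrac76)_n(\tfrac56)_n(\tfrac32)_n^2}{(\tfrac58)_n(\tfrac78)_n(\tfrac98)_n(\tfrac{11}{8})_n}.$$ (The sum is finite, since $(-n)_k=0$ for $k>n$.)
   Context: $(a)_j=\Gamma(a+j)/\Gamma(a)=a(a+1)\cdots(a+j-1)$ denotes the rising factorial (Pochhammer symbol), with $(a)_0=1$. *)

(* Defs.v *)
From HB Require Import structures.
From mathcomp Require Import all_boot all_order all_algebra.
Set Implicit Arguments. Unset Strict Implicit. Unset Printing Implicit Defensive.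
Import Order.TTheory GRing.Theory Num.Theory.
Local Open Scope ring_scope.

Definition poch (R : ringType) (a : R) (j : nat) : R :=
  \prod_(i < j) (a + i%:R).

(* Main.v *)
Require Import Defs.
From HB Require Import structures.
From mathcomp Require Import all_boot all_order all_algebra.
From Stdlib Require Import Ring_theory Field_theory Ring Field.
Import Order.TTheory GRing.Theory Num.Theory.
Local Open Scope ring_scope.

Definition r0 : rat := 0.
Definition r1 : rat := 1.
Definition radd (x y : rat) : rat := x + y.
Definition rmul (x y : rat) : rat := x * y.
Definition ropp (x : rat) : rat := - x.
Definition rinv (x : rat) : rat := x^-1.
Definition rnat (n : nat) : rat := n%:R.
Definition rsub (x y : rat) : rat := radd x (ropp y).
Definition rdiv (x y : rat) : rat := rmul x (rinv y).
Definition rpoch (a : rat) (k : nat) : rat := poch a k.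
Definition rexp (a : rat) (k : nat) : rat := a ^+ k.
Fixpoint rn (n : nat) : rat :=
  match n with 0 => r0 | 1 => r1 | S m => radd r1 (rn m) end.

Lemma r_ring : @ring_theory rat r0 r1 radd rmul rsub ropp (@eq rat).
Proof.
constructor; rewrite /r0 /r1 /radd /rmul /rsub /ropp.
- exact: add0r. - exact: addrC. - exact: addrA. - exact: mul1r. - exact: mulrC.
- exact: mulrA. - exact: mulrDl. - done. - exact: subrr.
Qed.
Lemma r_field : @field_theory rat r0 r1 radd rmul rsub ropp rdiv rinv (@eq rat).
Proof.
constructor; [exact: r_ring| by [] | done | ].
move=> p /eqP; rewrite /rmul /rinv /r0 /r1; exact: mulVf.
Qed.
Add Field ratF : r_field.

Declare Scope rr_scope.
Delimit Scope rr_scope with rr.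
Arguments radd (x y)%rr_scope.
Arguments rmul (x y)%rr_scope.
Arguments rsub (x y)%rr_scope.
Arguments rdiv (x y)%rr_scope.
Arguments ropp x%rr_scope.
Arguments rinv x%rr_scope.
Arguments rpoch a%rr_scope k%nat_scope.
Arguments rexp a%rr_scope k%nat_scope.
Notation "x + y" := (radd x y) : rr_scope.
Notation "x * y" := (rmul x y) : rr_scope.
Notation "x - y" := (rsub x y) : rr_scope.
Notation "- x" := (ropp x) : rr_scope.
Notation "x / y" := (rdiv x y) : rr_scope.

Lemma to_rat (x y : rat) : rmul x r1 = rmul y r1 -> x = y. Proof. by rewrite /rmul /r1 !mulr1. Qed.
Ltac rfld := apply: to_rat; cbv beta iota fix delta [rn]; field.
Ltac unr := rewrite /rdiv /rsub /r0 /r1 /radd /rmul /ropp /rinv /rnat /rpoch /rexp.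

Lemma rn_gt0 m : 0 < rn m.+1.
Proof.
elim: m => [|m IH] /=; first by rewrite /r1 ltr01.
by rewrite /radd /r1 addr_gt0 // ltr01.
Qed.

Ltac nn := match goal with
 | |- is_true (0 <= _ + _) => apply: addr_ge0; nn
 | |- is_true (0 <= _ * _) => apply: mulr_ge0; nn
 | _ => first [assumption | exact: ler0n | by [] | apply: ltW; assumption ]
 end.
Ltac ps := match goal with
 | |- is_true (0 < _ + _) =>
     first [ apply: addr_gt0; ps | apply: ltr_wpDl; [nn | ps] | apply: ltr_wpDr; [nn | ps] ]
 | |- is_true (0 < _ * _) => apply: mulr_gt0; ps
 | |- is_true (0 < _ ^-1) => rewrite invr_gt0; ps
 | |- is_true (0 < _ ^+ _) => apply: exprn_gt0; ps
 | _ => first [assumption | exact: rn_gt0 | by [] ]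
 end.


Lemma rpochS a k : rpoch a k.+1 = (rpoch a k * (a + rnat k))%rr.
Proof. by rewrite /rpoch /poch big_ord_recr. Qed.
Lemma rpochSl a k : rpoch a k.+1 = (a * rpoch (a + r1) k)%rr.
Proof.
rewrite /rpoch /poch big_ord_recl /rmul /radd /r1 addr0; congr (_ * _); apply: eq_bigr => i _.
by rewrite /= mulrS addrA.
Qed.
Lemma shift1 a b k : b = (a + r1)%rr -> a <> r0 -> rpoch b k = (rpoch a k * (a + rnat k) / a)%rr.
Proof.
move=> -> h; have := rpochSl a k; rewrite rpochS => ->.
by rfld.
Qed.
Lemma shift3 a b k : b = (a + rn 3)%rr -> a <> r0 -> (a + r1)%rr <> r0 -> (a + rn 2)%rr <> r0 ->
  rpoch b k = (rpoch a k * (a + rnat k) * (a + r1 + rnat k) * (a + rn 2 + rnat k) / (a * (a + r1) * (a + rn 2)))%rr.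
Proof.
move=> -> h0 h1 h2.
rewrite (@shift1 (a + rn 2)%rr (a + rn 3)%rr) //; last by rfld.
rewrite (@shift1 (a + r1)%rr (a + rn 2)%rr) //; last by rfld.
rewrite (@shift1 a (a + r1)%rr) //.
rfld; split => //; split => //.
Qed.
Lemma shiftN1 a b k : b = (a + r1)%rr -> (0 < - a)%rr ->
  rpoch b k = (rpoch a k * (- a - rnat k) / (- a))%rr.
Proof.
move=> e h; have ha : a <> r0.
  by move=> ha; move: h; rewrite ha; unr; rewrite oppr0 ltxx.
rewrite (@shift1 a b k e) //.
by rfld; split => //; apply/eqP; exact: lt0r_neq0 h.
Qed.
Lemma pos_neq0 x : 0 < x -> x <> r0.
Proof. by move/lt0r_neq0/eqP. Qed.

Lemma negpos_neq0 x : 0 < (- x)%rr -> x <> r0.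
Proof. move=> h e; move: h; rewrite e; unr; by rewrite oppr0 ltxx. Qed.

Lemma shiftN3 a b d k : b = (a + rn 3)%rr -> a = (- (d + rn 3))%rr -> 0 <= d ->
  rpoch b k = (rpoch a k * (a + rnat k) * (a + r1 + rnat k) * (a + rn 2 + rnat k) / (a * (a + r1) * (a + rn 2)))%rr.
Proof.
move=> e ea hd; apply: shift3 => //; apply: negpos_neq0.
- by rewrite ea; unr; rewrite opprK; ps.
- have -> : (- (a + r1))%rr = (d + rn 2)%rr by rewrite ea; rfld.
  by unr; ps.
- have -> : (- (a + rn 2))%rr = (d + r1)%rr by rewrite ea; rfld.
  by unr; ps.
Qed.
Lemma shiftN a b d k : b = (a + r1)%rr -> a = (- (d + r1))%rr -> 0 <= d ->
  rpoch b k = (rpoch a k * (d + r1 - rnat k) / (d + r1))%rr.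
Proof.
move=> e ea hd; have hd1 : 0 < (d + r1)%rr by unr; ps.
rewrite (@shift1 a b k e); last by rewrite ea; apply: negpos_neq0; unr; rewrite opprK; ps.
rewrite ea; rfld; split.
- by apply: pos_neq0; unr; ps.
- by apply: negpos_neq0; unr; rewrite opprK; ps.
Qed.
Lemma shiftP3 a b k : b = (a + rn 3)%rr -> 0 < a ->
  rpoch b k = (rpoch a k * (a + rnat k) * (a + r1 + rnat k) * (a + rn 2 + rnat k) / (a * (a + r1) * (a + rn 2)))%rr.
Proof.
move=> e ha; apply: shift3 => //; apply: pos_neq0; unr; ps.
Qed.
Lemma shiftP1 a b k : b = (a + r1)%rr -> 0 < a ->
  rpoch b k = (rpoch a k * (a + rnat k) / a)%rr.
Proof. by move=> e ha; apply: shift1 => //; apply: pos_neq0. Qed.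
Definition hpolyR (N K : rat) : rat :=
  ((((- ((((rn 3 * rn 10 + rn 3) * rn 10 + rn 8) * rn 10 + rn 8) * rn 10)) + N * ((- (((((rn 2 * rn 10 + rn 3) * rn 10 + rn 5) * rn 10) * rn 10 + rn 9) * rn 10 + rn 6)) + N * ((- (((((rn 6 * rn 10 + rn 7) * rn 10) * rn 10) * rn 10 + rn 8) * rn 10 + rn 8)) + N * ((- (((((rn 10 * rn 10) * rn 10 + rn 4) * rn 10 + rn 5) * rn 10) * rn 10 + rn 4)) + N * ((- (((((rn 8 * rn 10 + rn 3) * rn 10 + rn 5) * rn 10 + rn 6) * rn 10 + rn 3) * rn 10 + rn 2)) + N * ((- (((((rn 3 * rn 10 + rn 6) * rn 10 + rn 5) * rn 10 + rn 9) * rn 10 + rn 5) * rn 10 + rn 2)) + N * (- ((((rn 6 * rn 10 + rn 5) * rn 10 + rn 9) * rn 10 + rn 5) * rn 10 + rn 2)))))))) + K * (((- (((rn 3 * rn 10 + rn 8) * rn 10 + rn 5) * rn 10 + rn 2)) + N * ((- ((((rn 1 * rn 10 + rn 7) * rn 10 + rn 1) * rn 10 + rn 4) * rn 10 + rn 4)) + N * ((- ((((rn 2 * rn 10 + rn 8) * rn 10 + rn 5) * rn 10 + rn 5) * rn 10 + rn 2)) + N * ((- ((((rn 2 * rn 10 + rn 1) * rn 10) * rn 10 + rn 5) * rn 10 + rn 6)) + N * (- (((rn 5 * rn 10 + rn 8) * rn 10) * rn 10 + rn 8)))))) + K * (((((rn 7 * rn 10 + rn 4) * rn 10 + rn 8)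 * rn 10 + rn 8) + N * (((((rn 3 * rn 10 + rn 3) * rn 10 + rn 8) * rn 10 + rn 4) * rn 10) + N * (((((rn 5 * rn 10 + rn 6) * rn 10 + rn 8) * rn 10 + rn 5) * rn 10 + rn 6) + N * (((((rn 4 * rn 10 + rn 2) * rn 10 + rn 1) * rn 10 + rn 1) * rn 10 + rn 2) + N * ((((rn 1 * rn 10 + rn 1) * rn 10 + rn 6) * rn 10 + rn 1) * rn 10 + rn 6))))) + K * ((((rn 8 * rn 10 + rn 6) * rn 10) + N * ((((rn 1 * rn 10 + rn 7) * rn 10 + rn 9) * rn 10 + rn 2) + N * ((rn 9 * rn 10 + rn 9) * rn 10 + rn 2))) + K * (((- ((rn 8 * rn 10 + rn 4) * rn 10)) + N * ((- (((rn 1 * rn 10 + rn 7) * rn 10 + rn 9) * rn 10 + rn 2)) + N * (- ((rn 9 * rn 10 + rn 9) * rn 10 + rn 2)))) + K * ((- (rn 4 * rn 10 + rn 8)) + K * (rn 3 * rn 10 + rn 2))))))))%rr.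
Arguments hpolyR (N K)%rr_scope.
Definition gR (N K : rat) : rat :=
  (K * (N + rn 3 / rn 2 + K) * (rn 3 * N + rn 9 / rn 2 + K) * hpolyR N K
  / ((N + rn 1) * (rn 3 * N + rn 2) * (rn 3 * N + rn 3) * (rn 3 * N + rn 4)))%rr.
Arguments gR (N K)%rr_scope.

Definition Fr (n k : nat) : rat :=
  (rexp (- r1) k * (rn 4 * rnat k + r1) *
   (rpoch (- rnat n) k * rpoch (- (rn 3 * rnat n) - r1) k * rpoch (r1 / rn 2) k)
   / (rnat k`! * rpoch (rnat n + rn 3 / rn 2) k * rpoch (rn 3 * rnat n + rn 5 / rn 2) k))%rr.
Definition Br (n k : nat) : rat :=
  (rexp (- r1) k *
   (rpoch (- (r1 + rnat n)) k * rpoch (- (rn 3 * (r1 + rnat n)) - r1) k * rpoch (r1 / rn 2) k)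
   / (rnat k`! * rpoch ((r1 + rnat n) + rn 3 / rn 2) k * rpoch (rn 3 * (r1 + rnat n) + rn 5 / rn 2) k))%rr.
Definition Gr (n k : nat) : rat := (Br n k * gR (rnat n) (rnat k))%rr.
Definition aR (n : nat) : rat :=
  ((rn 8 * rnat n + rn 5) * (rn 8 * rnat n + rn 7) * (rn 8 * rnat n + rn 9) * (rn 8 * rnat n + rn 11))%rr.
Definition bR (n : nat) : rat :=
  (rn 3 * (rn 6 * rnat n + rn 5) * (rn 6 * rnat n + rn 7) * ((rn 2 * rnat n + rn 3) * (rn 2 * rnat n + rn 3)))%rr.

Lemma rnatS n : rnat n.+1 = (r1 + rnat n)%rr.
Proof. by rewrite /rnat /radd /r1 mulrS. Qed.
Lemma rnat_factS k : rnat (k.+1)`! = (rnat k.+1 * rnat k`!)%rr.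
Proof. by rewrite /rnat /rmul factS natrM. Qed.
Lemma rexpS a k : rexp a k.+1 = (a * rexp a k)%rr.
Proof. by rewrite /rexp /rmul exprS. Qed.
Lemma rpoch_pos a k : 0 < a -> 0 < rpoch a k.
Proof.
move=> ha; rewrite /rpoch /poch; apply: prodr_gt0 => i _.
exact: ltr_wpDr (ler0n _ _) ha.
Qed.

Lemma key n k : (aR n * Fr n.+1 k - bR n * Fr n k)%rr = (Gr n k.+1 - Gr n k)%rr.
Proof.
rewrite /Gr /Br /Fr (rnatS n) !rpochS rexpS (rnat_factS k) (rnatS k).
rewrite (@shiftN (- (r1 + rnat n))%rr (- rnat n)%rr (rnat n)); first last.
- by unr; nn.
- by rfld.
- by rfld.
rewrite (@shiftN (- (rn 3 * rnat n + r1 + r1))%rr (- (rn 3 * rnat n) - r1)%rr (rn 3 * rnat n + r1)%rr); first last.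
- by unr; nn.
- by rfld.
- by rfld.
rewrite (@shiftN (- (rn 3 * rnat n + r1 + r1 + r1))%rr (- (rn 3 * rnat n + r1 + r1))%rr (rn 3 * rnat n + r1 + r1)%rr); first last.
- by unr; nn.
- by rfld.
- by rfld.
rewrite (@shiftN (- (rn 3 * (r1 + rnat n)) - r1)%rr (- (rn 3 * rnat n + r1 + r1 + r1))%rr (rn 3 * rnat n + r1 + r1 + r1)%rr); first last.
- by unr; nn.
- by rfld.
- by rfld.
rewrite (@shiftP1 (rnat n + rn 3 / rn 2)%rr ((r1 + rnat n) + rn 3 / rn 2)%rr); first last.
- by unr; ps.
- by rfld.
rewrite (@shiftP3 (rn 3 * rnat n + rn 5 / rn 2)%rr (rn 3 * (r1 + rnat n) + rn 5 / rn 2)%rr); first last.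
- by unr; ps.
- by rfld.
have hD1 : 0 < rpoch (rnat n + rn 3 / rn 2)%rr k by apply: rpoch_pos; unr; ps.
have hD2 : 0 < rpoch (rn 3 * rnat n + rn 5 / rn 2)%rr k by apply: rpoch_pos; unr; ps.
have hkf : 0 < rnat k`! by rewrite /rnat ltr0n fact_gt0.
rewrite /aR /bR /gR /hpolyR.
rfld; repeat split; apply: pos_neq0; unr; ps.
Qed.

Definition Tr (n : nat) : rat :=
  (rexp (rexp (rn 3) 3 / rexp (rn 2) 8) n *
   (rpoch (rn 7 / rn 6) n * rpoch (rn 5 / rn 6) n * rexp (rpoch (rn 3 / rn 2) n) 2)
   / (rpoch (rn 5 / rn 8) n * rpoch (rn 7 / rn 8) n * rpoch (rn 9 / rn 8) n * rpoch (rn 11 / rn 8) n))%rr.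

Lemma rexp0 a : rexp a 0 = r1. Proof. by []. Qed.
Lemma rpoch0 a : rpoch a 0 = r1. Proof. by rewrite /rpoch /poch big_ord0. Qed.

Lemma Tstep n : (aR n * Tr n.+1)%rr = (bR n * Tr n)%rr.
Proof.
have h1 : 0 < rpoch (rn 5 / rn 8) n by apply: rpoch_pos; unr; ps.
have h2 : 0 < rpoch (rn 7 / rn 8) n by apply: rpoch_pos; unr; ps.
have h3 : 0 < rpoch (rn 9 / rn 8) n by apply: rpoch_pos; unr; ps.
have h4 : 0 < rpoch (rn 11 / rn 8) n by apply: rpoch_pos; unr; ps.
have h5 : 0 < rexp (rexp (rn 3) 3 / rexp (rn 2) 8) n by unr; ps.
rewrite /Tr !rexpS !rexp0 !rpochS /aR /bR.
rfld; repeat split; apply: pos_neq0; unr; ps.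
Qed.
Lemma Fr_last n : Fr n n.+1 = 0.
Proof. by rewrite /Fr rpochS; unr; rewrite addNr !(mulr0, mul0r). Qed.
Lemma Gr0 n : Gr n 0 = 0.
Proof. by rewrite /Gr /gR; unr; rewrite mulr0n !(mulr0, mul0r). Qed.
Lemma Grlast n : Gr n n.+2 = 0.
Proof. by rewrite /Gr /Br rpochS (rnatS n); unr; rewrite addNr !(mulr0, mul0r). Qed.

Lemma key' n k : aR n * Fr n.+1 k - bR n * Fr n k = Gr n k.+1 - Gr n k.
Proof. exact: key. Qed.
Lemma Tstep' n : aR n * Tr n.+1 = bR n * Tr n.
Proof. exact: Tstep. Qed.
Lemma aR_neq0 n : aR n != 0.
Proof. by apply: lt0r_neq0; rewrite /aR; unr; ps. Qed.

Lemma Sstep n : aR n * (\sum_(k < n.+2) Fr n.+1 k) = bR n * (\sum_(k < n.+1) Fr n k).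
Proof.
apply/eqP; rewrite -subr_eq0; apply/eqP.
have -> : \sum_(k < n.+1) Fr n k = \sum_(k < n.+2) Fr n k.
  by rewrite [in RHS]big_ord_recr /= Fr_last addr0.
rewrite !mulr_sumr -sumrB.
under eq_bigr => i _ do rewrite key'.
rewrite -(big_mkord xpredT (fun i => Gr n i.+1 - Gr n i)).
by rewrite telescope_sumr // Grlast Gr0 subr0.
Qed.

Lemma main n : \sum_(k < n.+1) Fr n k = Tr n.
Proof.
elim: n => [|n IH].
  rewrite big_ord1 /Fr /Tr !rpoch0 !rexp0.
  by apply/eqP; vm_compute.
apply: (mulfI (aR_neq0 n)).
by rewrite Sstep IH Tstep'.
Qed.

Theorem theorem4 (n : nat) :
  \sum_(k < n.+1)
     (-1) ^+ k * (4 * k%:R + 1) *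
     (poch (- n%:R) k * poch (- (3 * n%:R) - 1) k * poch (1 / 2) k)
     / (k`!%:R * poch (n%:R + 3 / 2) k * poch (3 * n%:R + 5 / 2) k)
  = ((3 ^+ 3 / 2 ^+ 8) ^+ n
     * (poch (7 / 6) n * poch (5 / 6) n * poch (3 / 2) n ^+ 2)
     / (poch (5 / 8) n * poch (7 / 8) n * poch (9 / 8) n * poch (11 / 8) n)
     : rat).
Proof.
exact: main n.
Qed.
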